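(* Let $m\ge3$, let $\tilde\omega$ be a symmetric fractional polymorphism of $\Gamma$ of arity $m-1$, and let $\tilde{\mathbb G}$ and $\mathbb G$ be as below. Then $\tilde{\mathbb G}\subseteq\mathbb G$.
   Context: $D$ finite, $\Gamma$ a finite set of cost functions $f:D^n\to\mathbb Q\cup\{\infty\}$, $\mathrm{dom} f=\{x:f(x)<\infty\}$. A $k$-ary fractional polymorphism: probability distribution $\nu$ on operations $g:D^k\to D$ with $\sum\nu(g)f(g(x^1,\dots,x^k))\le\frac1k\sum f(x^i)$ for $f\in\Gamma$, $x^i\in\mathrm{dom} f$ (componentwise); symmetric if all support operations are invariant under all permutations of arguments. Maps $\mathbf g=(g_1,\dots,g_m):D^m\to D^m$ act on $[D^n]^m$ coordinatewise; $f^m(x)=\frac1m\sum f(x^i)$; generalized fractional polymorphism of arity $m\to m$: finitely supported probability distribution $\rho$ on maps with $\sum\rho(\mathbf g)f^m(\mathbf g(x))\le f^m(x)$ for $f\in\Gamma$, $x\in[\mathrm{dom} f]^m$. $\Omega=\{\mathbf g:(g_{\pi(1)},\dots,g_{\pi(m)})(x)=\mathbf g(x_{\pi(1)},\dots,x_{\pi(m)})\ \forall x\in D^m,\pi\}$. $\omega$: generalized fractional polymorphism of arity $m\to m$ with support in $\Omega$ containing the support of every other such; $\mathbb G=\{\mathbf g_k\circ\dots\circ\mathbf g_1:k\ge0,\mathbf g_i\in\mathrm{supp}(\omega)\}$. For $x\in D^m$ and $k\in[m]$, $x_{-k}\in D^{m-1}$ is $x$ with the $k$-th entry deleted. For $s\in\mathrm{supp}(\tilde\omega)$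 define $\mathbb 1^s:D^m\to D^m$ by $\mathbb 1^s(x)=(s(x_{-1}),\dots,s(x_{-m}))$, and $\tilde{\mathbb G}=\{\mathbb 1^{s_k}\circ\dots\circ\mathbb 1^{s_1}:k\ge0,s_i\in\mathrm{supp}(\tilde\omega)\}$ (identity for $k=0$). *)

(* Defs.v *)
From HB Require Import structures.
From Stdlib Require List.
From mathcomp Require Import all_boot all_order all_algebra all_fingroup.
Set Implicit Arguments. Unset Strict Implicit. Unset Printing Implicit Defensive.
Import Order.TTheory GRing.Theory Num.Theory.
Local Open Scope ring_scope.

Definition vec (D : finType) (k : nat) := {ffun 'I_k -> D}.
Definition op (D : finType) (k : nat) := {ffun vec D k -> D}.
(* maps g = (g_1,...,g_m) : D^m -> D^m *)
Definition gmap (D : finType) (m : nat) := {ffun 'I_m -> op D m}.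

(* cost function f : D^n -> Q \cup {oo}; None encodes oo *)
Record cost (D : finType) := Cost { c_ar : nat; c_fun : vec D c_ar -> option rat }.
Arguments c_ar {D} _.
Arguments c_fun {D} _ _.

Definition indom (D : finType) (f : cost D) (x : vec D (c_ar f)) : bool :=
  c_fun f x != None.

(* finite value (only used on dom f) *)
Arguments indom {D} f x.
Definition fin (R : realFieldType) (v : option rat) : R :=
  if v is Some q then ratr q else 0.

(* applying a k-ary operation coordinatewise to x = (x^1,...,x^k), x^i in D^n *)
Definition opapp (D : finType) (k n : nat) (o : op D k) (x : 'I_k -> vec D n) : vec D n :=
  [ffun j => o [ffun i => x i j]].

Definition gapp (D : finType) (m : nat) (g : gmap D m) (y : vec D m) : vec D m :=
  [ffun i => g i y].

Definition fpol (R : realFieldType) (D : finType) (Gamma : seq (cost D)) (k : nat)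
  (nu : {ffun op D k -> R}) : Prop :=
  [/\ (forall o, 0 <= nu o), \sum_o nu o = 1 &
   forall f, Stdlib.Lists.List.In f Gamma -> forall x : 'I_k -> vec D (c_ar f),
     (forall i, indom f (x i)) ->
     (forall o, 0 < nu o -> indom f (opapp o x)) /\
     \sum_o nu o * fin R (c_fun f (opapp o x))
       <= k%:R^-1 * \sum_i fin R (c_fun f (x i))].

Definition symmetric_fpol (R : realFieldType) (D : finType) (k : nat)
  (nu : {ffun op D k -> R}) : Prop :=
  forall o, 0 < nu o -> forall (pi : {perm 'I_k}) (y : vec D k),
    o [ffun j => y (pi j)] = o y.

Definition gfpol (R : realFieldType) (D : finType) (Gamma : seq (cost D)) (m : nat)
  (rho : {ffun gmap D m -> R}) : Prop :=
  [/\ (forall g, 0 <= rho g), \sum_g rho g = 1 &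
   forall f, Stdlib.Lists.List.In f Gamma -> forall x : 'I_m -> vec D (c_ar f),
     (forall i, indom f (x i)) ->
     (forall g, 0 < rho g -> forall i, indom f (opapp (g i) x)) /\
     \sum_g rho g * (m%:R^-1 * \sum_i fin R (c_fun f (opapp (g i) x)))
       <= m%:R^-1 * \sum_i fin R (c_fun f (x i))].

Definition inOmega (D : finType) (m : nat) (g : gmap D m) : Prop :=
  forall (pi : {perm 'I_m}) (y : vec D m) (i : 'I_m),
    g (pi i) y = g i [ffun j => y (pi j)].

(* composition g_k o ... o g_1 for s = [:: g_1; ...; g_k] *)
Definition gcomp (D : finType) (m : nat) (s : seq (gmap D m)) : vec D m -> vec D m :=
  foldl (fun acc g => gapp g \o acc) id s.

Definition GG (R : realFieldType) (D : finType) (m : nat) (omega : {ffun gmap D m -> R})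
  (h : vec D m -> vec D m) : Prop :=
  exists s : seq (gmap D m), all (fun g => 0 < omega g) s /\ h =1 gcomp s.

(* x_{-k}: delete the k-th entry *)
Definition del (D : finType) (m : nat) (y : vec D m) (k : 'I_m) : vec D m.-1 :=
  [ffun j : 'I_m.-1 => y (insubd k (bump k j))].

(* 1^s(y) = (s(y_{-1}),...,s(y_{-m})) *)
Definition one_s (D : finType) (m : nat) (s : op D m.-1) (y : vec D m) : vec D m :=
  [ffun k => s (del y k)].

Definition tcomp (D : finType) (m : nat) (s : seq (op D m.-1)) : vec D m -> vec D m :=
  foldl (fun acc o => one_s o \o acc) id s.

Definition GGt (R : realFieldType) (D : finType) (m : nat) (nut : {ffun op D m.-1 -> R})
  (h : vec D m -> vec D m) : Prop :=
  exists s : seq (op D m.-1), all (fun o => 0 < nut o) s /\ h =1 tcomp s.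

(* Main.v *)
Require Import Defs.
From HB Require Import structures.
From mathcomp Require Import all_boot all_order all_algebra all_fingroup.
Import Order.TTheory GRing.Theory Num.Theory.
Local Open Scope ring_scope.

Section Aux.
Variables (D : finType) (m' : nat).

Definition Gs (o : op D m') : gmap D m'.+1 :=
  [ffun k => [ffun y : vec D m'.+1 => o (del y k)]].

Lemma delE (y : vec D m'.+1) k : del y k = [ffun j => y (lift k j)].
Proof.
apply/ffunP=> j; rewrite !ffunE; congr (y _); apply: val_inj.
rewrite val_insubd /=.
by have := ltn_ord (lift k j); rewrite /= => ->.
Qed.

Section Perm.
Variables (pi : {perm 'I_m'.+1}) (i : 'I_m'.+1).
Definition fpi (j : 'I_m') : 'I_m' := odflt j (unlift (pi i) (pi (lift i j))).
Lemma fpiE j : lift (pi i) (fpi j) = pi (lift i j).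
Proof.
have hne : pi i != pi (lift i j) by rewrite (inj_eq perm_inj) neq_lift.
case: (unlift_some hne) => k hk hu.
by rewrite /fpi hu /= hk.
Qed.
Lemma fpi_inj : injective fpi.
Proof.
move=> j1 j2 e.
have : pi (lift i j1) = pi (lift i j2) by rewrite -!fpiE e.
by move/perm_inj/lift_inj.
Qed.
End Perm.

Lemma Gs_Omega (o : op D m') :
  (forall (pi : {perm 'I_m'}) (y : vec D m'), o [ffun j => y (pi j)] = o y) ->
  inOmega (Gs o).
Proof.
move=> hs pi y i; rewrite !ffunE.
rewrite [RHS](_ : _ = o [ffun j => del y (pi i) (perm (fpi_inj pi i) j)]);
  first by rewrite hs.
congr (o _); apply/ffunP=> j; rewrite !delE !ffunE permE fpiE.
by [].
Qed.

Lemma opapp_Gs (o : op D m') n (x : 'I_m'.+1 -> vec D n) i :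
  opapp (Gs o i) x = opapp o (fun j => x (lift i j)).
Proof.
apply/ffunP=> k; rewrite !ffunE delE; congr (o _); apply/ffunP=> j.
by rewrite !ffunE.
Qed.

Lemma foldl_eq (s : seq (op D m'.+1.-1)) (a b : vec D m'.+1 -> vec D m'.+1) :
  a =1 b ->
  foldl (fun acc o => one_s o \o acc) a s =1
  foldl (fun acc g => gapp g \o acc) b (map Gs s).
Proof.
elim: s a b => [|o s IH] a b hab //=.
apply: IH => y /=; rewrite hab; apply/ffunP=> k; rewrite !ffunE.
by [].
Qed.

Lemma tcomp_gcomp (s : seq (op D m'.+1.-1)) :
  tcomp s =1 gcomp (map Gs s).
Proof. exact: foldl_eq. Qed.

End Aux.
Arguments Gs {D m'}.

Theorem proposition7p6 (R : realFieldType) (D : finType) (Gamma : seq (cost D))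
  (m : nat) (hm : (3 <= m)%N)
  (omega : {ffun gmap D m -> R})
  (Homega : gfpol Gamma omega)
  (HomegaOmega : forall g, 0 < omega g -> inOmega g)
  (Hmax : forall rho : {ffun gmap D m -> R}, gfpol Gamma rho ->
            (forall g, 0 < rho g -> inOmega g) ->
            forall g, 0 < rho g -> 0 < omega g)
  (nut : {ffun op D m.-1 -> R})
  (Hnut : fpol Gamma nut) (Hsym : symmetric_fpol nut) :
  forall h : vec D m -> vec D m, GGt nut h -> GG omega h.
Proof.
case: m hm omega Homega HomegaOmega Hmax nut Hnut Hsym => [|m'] // hm omega
  Homega HomegaOmega Hmax nut Hnut Hsym.
case: Hnut => hge hsum hc.
set rho : {ffun gmap D m'.+1 -> R} := [ffun g => \sum_(o | Gs o == g) nut o].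
have sum_ex : forall X : gmap D m'.+1 -> R,
    \sum_g rho g * X g = \sum_o nut o * X (Gs o).
  move=> X; rewrite [RHS](partition_big (@Gs D m') xpredT) //=.
  apply: eq_bigr => g _; rewrite ffunE mulr_suml.
  by apply: eq_big => // o /eqP ->.
have supp : forall g, 0 < rho g -> exists2 o, Gs o = g & 0 < nut o.
  move=> g; case: (pickP (fun o => (Gs o == g) && (0 < nut o))) =>
    [o /andP[/eqP <- ho] _ | hn]; first by exists o.
  rewrite ffunE big1 ?ltxx // => o /eqP e.
  have := hn o; rewrite e eqxx /= lt_neqAle hge andbT => /negbFE /eqP <-.
  by [].
have Hrho : gfpol Gamma rho.
  split.
  - by move=> g; rewrite ffunE; apply: sumr_ge0.
  - by have := sum_ex (fun _ => 1); under eq_bigr do rewrite mulr1;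
      move=> ->; under eq_bigr do rewrite mulr1.
  move=> f hf x hx; split.
    move=> g /supp [o <- ho] i; rewrite opapp_Gs.
    by case: (hc f hf (fun j => x (lift i j)) (fun j => hx _)) => h _; apply: h.
  rewrite sum_ex.
  set c := fun v : vec D (c_ar f) => fin R (c_fun f (v)).
  have step : \sum_o nut o * (m'.+1%:R^-1 * \sum_i c (opapp (Gs o i) x)) =
     m'.+1%:R^-1 * \sum_i \sum_o nut o * c (opapp o (fun j => x (lift i j))).
    rewrite [X in _ = _ * X]exchange_big /= [RHS]mulr_sumr; apply: eq_bigr => o _.
    rewrite mulrCA !mulr_sumr; apply: eq_bigr => i _.
    by rewrite opapp_Gs.
  rewrite step; apply: ler_wpM2l; first by rewrite invr_ge0 ler0n.
  apply: le_trans (ler_sum _ (fun i _ =>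
     (hc f hf (fun j => x (lift i j)) (fun j => hx _)).2)) _.
  rewrite le_eqVlt; apply/orP; left; apply/eqP.
  set S := \sum_i c (x i).
  have hS : forall i : 'I_m'.+1, \sum_(j < m') c (x (lift i j)) = S - c (x i).
    move=> i; rewrite /S (bigD1_ord i) //=.
    by rewrite addrC addrK.
  under eq_bigr do rewrite hS.
  rewrite -mulr_sumr sumrB sumr_const card_ord mulrSr addrK.
  rewrite /= -[S *+ m']mulr_natl mulrA mulVf ?mul1r // pnatr_eq0 -lt0n.
  by rewrite -ltnS ltnW.
have HrhoO : forall g, 0 < rho g -> inOmega g.
  by move=> g /supp [o <- ho]; apply: Gs_Omega => pi y; apply: Hsym.
move=> h [s [hs eh]]; exists (map (@Gs D m') s); split.
  rewrite all_map; apply/allP => o os /=.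
  apply: (Hmax rho Hrho HrhoO); rewrite ffunE (bigD1 o) //=.
  rewrite ltr_wpDr //; first by apply: sumr_ge0.
  by move/allP: hs; apply.
by move=> y; rewrite eh tcomp_gcomp.
Qed.
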